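(* Let $E$ be a finite-dimensional real inner product space and $C(t)=\bigcap_{i=1}^k\{x\in E:(x,n_i)_0\le c_i(t)\}$ with $n_i\in E$ and globally Lipschitz continuous functions $c_i$, $C(t)$ nonempty. Assume that for each $t\in[0,T]$ and $x\in C(t)$ the vectors $\{n_i:i\in J(t,x)\}$ are linearly independent, where $J(t,x)=\{i:(x,n_i)_0=c_i(t)\}$. Then for a solution $x$ of $-\dot x\in N^0_{C(t)}(x)$ on $[0,T]$ there exist integrable functions $\lambda_i:[0,T]\to[0,\infty)$, $i=1,\dots,k$, such that $-\dot x(t)=\sum_{i=1}^k\lambda_i(t)n_i$ for a.a. $t\in[0,T]$.
   Context: $N^0_K(x)=\{\zeta:(\zeta,c-x)_0\le0\ \forall c\in K\}$ if $x\in K$, $\emptyset$ otherwise. A solution is a Lipschitz function with $x(t)\in C(t)$ satisfying the inclusion a.e. *)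

(* Defs.v *)
From HB Require Import structures.
From mathcomp Require Import all_boot all_order all_algebra.
From mathcomp Require Import all_classical all_reals all_analysis.
Set Implicit Arguments. Unset Strict Implicit. Unset Printing Implicit Defensive.
Import Order.TTheory GRing.Theory Num.Theory.
Import numFieldNormedType.Exports.
Local Open Scope classical_set_scope.
Local Open Scope ring_scope.

(* The finite-dimensional real inner product space E is modelled as
   'rV[R]_n equipped with the inner product (x,y)_0 := x M y^T for a
   symmetric positive definite matrix M (every finite-dimensional real
   inner product space is of this form). *)
Definition ip (R : realType) (n : nat) (M : 'M[R]_n) (x y : 'rV[R]_n) : R :=
  (x *m M *m y^T) 0 0.

Definition is_inner_product_matrix (R : realType) (n : nat) (M : 'M[R]_n) : Prop :=
  M^T = M /\ (forall x : 'rV[R]_n, x != 0 -> 0 < ip M x x).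

Definition normal_cone (R : realType) (n : nat) (M : 'M[R]_n)
  (K : set 'rV[R]_n) (x : 'rV[R]_n) : set 'rV[R]_n :=
  [set z | K x /\ forall c, K c -> ip M z (c - x) <= 0].

Definition polyhedron (R : realType) (n k : nat) (M : 'M[R]_n)
  (nv : 'I_k -> 'rV[R]_n) (c : 'I_k -> R -> R) (t : R) : set 'rV[R]_n :=
  [set x | forall i : 'I_k, ip M x (nv i) <= c i t].

Definition active (R : realType) (n k : nat) (M : 'M[R]_n)
  (nv : 'I_k -> 'rV[R]_n) (c : 'I_k -> R -> R) (t : R) (x : 'rV[R]_n) : {set 'I_k} :=
  [set i | ip M x (nv i) == c i t].

Definition lin_indep_on (R : realType) (n k : nat) (nv : 'I_k -> 'rV[R]_n)
  (J : {set 'I_k}) : Prop :=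
  forall a : 'I_k -> R, \sum_(i in J) a i *: nv i = 0 -> forall i, i \in J -> a i = 0.

Definition globally_lipschitz (R : realType) (f : R -> R) : Prop :=
  exists L : R, forall s t : R, `|f s - f t| <= L * `|s - t|.

Definition is_solution (R : realType) (n : nat) (M : 'M[R]_n)
  (C : R -> set 'rV[R]_n) (T : R) (x : R -> 'rV[R]_n) : Prop :=
  (exists L : R, forall s t, s \in `[0, T] -> t \in `[0, T] ->
      `|x s - x t| <= L * `|s - t|) /\
  (forall t, t \in `[0, T] -> C t (x t)) /\
  {ae (@lebesgue_measure R), forall t, t \in `[0, T] ->
      derivable x t 1 /\ normal_cone M (C t) (x t) (- derive1 x t)}.

(* Main.v *)
Require Import Defs.
From HB Require Import structures.
From mathcomp Require Import all_boot all_order all_algebra.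
From mathcomp Require Import all_classical all_reals all_analysis.
Import Order.TTheory GRing.Theory Num.Theory.
Import numFieldNormedType.Exports.
Local Open Scope classical_set_scope.
Local Open Scope ring_scope.
From mathcomp Require Import ring lra measurable_realfun.
Section LA.
Context {R : realType} {n k : nat} (M : 'M[R]_n).

Lemma ipDl (x y z : 'rV[R]_n) : ip M (x + y) z = ip M x z + ip M y z.
Proof. by rewrite /ip !mulmxDl mxE. Qed.
Lemma ipZl a (x z : 'rV[R]_n) : ip M (a *: x) z = a * ip M x z.
Proof. by rewrite /ip -!scalemxAl mxE. Qed.
Lemma ip0l (z : 'rV[R]_n) : ip M 0 z = 0.
Proof. by rewrite /ip !mul0mx mxE. Qed.
Lemma ipNl (x z : 'rV[R]_n) : ip M (- x) z = - ip M x z.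
Proof. by rewrite -scaleN1r ipZl mulN1r. Qed.
Lemma ipBl (x y z : 'rV[R]_n) : ip M (x - y) z = ip M x z - ip M y z.
Proof. by rewrite ipDl ipNl. Qed.
Lemma ip_suml I (r : seq I) (P : pred I) (F : I -> 'rV[R]_n) z :
  ip M (\sum_(i <- r | P i) F i) z = \sum_(i <- r | P i) ip M (F i) z.
Proof. by apply: (big_morph (fun x => ip M x z)) => [x y|]; rewrite ?ipDl ?ip0l. Qed.

Lemma ipC (x y : 'rV[R]_n) : M^T = M -> ip M x y = ip M y x.
Proof.
move=> MT; have h (A : 'M[R]_1) : A 0 0 = A^T 0 0 by rewrite mxE.
by rewrite /ip h !trmx_mul MT trmxK mulmxA.
Qed.
End LA.
Section LA2.
Context {R : realType} {n k : nat} (M : 'M[R]_n) (nv : 'I_k -> 'rV[R]_n).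

Definition Gm (J : {set 'I_k}) : 'M[R]_k :=
  \matrix_(i, j) if (i \in J) && (j \in J) then ip M (nv i) (nv j) else (i == j)%:R.

Lemma mulG_in (J : {set 'I_k}) (a : 'rV[R]_k) (j : 'I_k) : j \in J ->
  (a *m Gm J) 0 j = ip M (\sum_(i in J) a 0 i *: nv i) (nv j).
Proof.
move=> jJ; rewrite mxE ip_suml (bigID (mem J)) /= [X in _ + X]big1 ?addr0.
  by apply: eq_bigr => i iJ; rewrite mxE iJ jJ /= ipZl.
move=> i iJ; rewrite mxE (negbTE iJ) /=.
have -> : (i == j) = false by apply/negP => /eqP ij; rewrite ij jJ in iJ.
by rewrite mulr0.
Qed.

Lemma mulG_out (J : {set 'I_k}) (a : 'rV[R]_k) (j : 'I_k) : j \notin J -> (a *m Gm J) 0 j = a 0 j.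
Proof.
move=> jJ; rewrite mxE (bigD1 j) //= mxE (negbTE jJ) andbF eqxx mulr1 big1 ?addr0 //.
by move=> i ij; rewrite mxE (negbTE jJ) andbF (negbTE ij) mulr0.
Qed.

Lemma posdef_eq0 (w : 'rV[R]_n) : is_inner_product_matrix M -> ip M w w = 0 -> w = 0.
Proof.
move=> [_ pd] h; apply/eqP; apply/negPn/negP => /pd; by rewrite h ltxx.
Qed.

Lemma ip_sumr (MT : M^T = M) I (r : seq I) (P : pred I) (F : I -> 'rV[R]_n) z :
  ip M z (\sum_(i <- r | P i) F i) = \sum_(i <- r | P i) ip M z (F i).
Proof.
rewrite ipC // ip_suml; apply: eq_bigr => i _; exact: ipC.
Qed.

Lemma Gm_unit (J : {set 'I_k}) : is_inner_product_matrix M -> lin_indep_on nv J -> Gm J \in unitmx.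
Proof.
move=> ipm li; have MT := ipm.1.
rewrite -row_free_unit; apply: inj_row_free => a aG.
set w := \sum_(i in J) a 0 i *: nv i.
have hw : forall j, j \in J -> ip M w (nv j) = 0.
  by move=> j jJ; rewrite -mulG_in // aG mxE.
have w0 : w = 0.
  apply: (posdef_eq0 w ipm).
  rewrite {2}/w ip_sumr // big1 // => i iJ.
  by rewrite ipC // ipZl ipC // hw // mulr0.
have aJ := li (fun i => a 0 i) w0.
apply/rowP => j; rewrite mxE.
case: (boolP (j \in J)) => jJ; first exact: aJ.
by rewrite -(mulG_out J a j jJ) aG mxE.
Qed.
End LA2.
Section LA3.
Context {R : realType} {n k : nat} (M : 'M[R]_n) (nv : 'I_k -> 'rV[R]_n)
  (c : 'I_k -> R -> R) (t : R) (y v : 'rV[R]_n).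
Hypothesis ipm : is_inner_product_matrix M.
Hypothesis hy : forall i, ip M y (nv i) <= c i t.
Hypothesis hv : forall z, (forall i, ip M z (nv i) <= c i t) -> ip M v (z - y) <= 0.

Local Notation J := (active M nv c t y).

Lemma dir_le0 d : (forall i, i \in J -> ip M d (nv i) <= 0) -> ip M v d <= 0.
Proof.
move=> hd; have MT := ipm.1.
pose s i := c i t - ip M y (nv i).
have s_gt0 i : i \notin J -> 0 < s i.
  rewrite /active inE => hi; rewrite subr_gt0 lt_neqAle hi hy //.
pose S := \sum_(i | i \notin J) `|ip M d (nv i)| / s i.
have S_ge0 : 0 <= S.
  by apply: sumr_ge0 => i hi; rewrite divr_ge0 // ltW // s_gt0.
pose e := (1 + S)^-1.
have e_gt0 : 0 < e by rewrite invr_gt0 ltr_wpDr.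
pose z := y + e *: d.
have zP : forall i, ip M z (nv i) <= c i t.
  move=> i; rewrite /z ipDl ipZl.
  case: (boolP (i \in J)) => hi.
    move: (hi); rewrite /active inE => /eqP ->.
    by rewrite gerDl mulr_ge0_le0 // ?(ltW e_gt0) ?hd.
  rewrite -lerBrDl -/(s i).
  have si := s_gt0 _ hi.
  apply: (le_trans (ler_wpM2l (ltW e_gt0) (ler_norm _))).
  rewrite /e ler_pdivrMl ?ltr_wpDr //.
  have -> : `|ip M d (nv i)| = `|ip M d (nv i)| / s i * s i by rewrite divfK // gt_eqF.
  apply: ler_wpM2r; first exact: ltW.
  apply: (@le_trans _ _ S); last by rewrite lerDr.
  by rewrite /S (bigD1 i) //= lerDl sumr_ge0 // => j /andP[hj _]; rewrite divr_ge0 // ltW // s_gt0.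
have := hv z zP; rewrite /z addrC addKr ipC // ipZl ipC //.
by rewrite pmulr_rle0.
Qed.

Definition bJ (J : {set 'I_k}) (w : 'rV[R]_n) : 'rV[R]_k :=
  \row_j (if j \in J then ip M w (nv j) else 0).

Lemma key_repr : lin_indep_on nv J ->
  v = \sum_i (bJ J v *m invmx (Gm M nv J)) 0 i *: nv i /\
  forall i, 0 <= (bJ J v *m invmx (Gm M nv J)) 0 i.
Proof.
move=> li; have MT := ipm.1; have Gu := Gm_unit M nv J ipm li.
set mu := bJ J v *m invmx (Gm M nv J).
have muG : mu *m Gm M nv J = bJ J v by rewrite -mulmxA mulVmx // mulmx1.
have mu_out j : j \notin J -> mu 0 j = 0.
  by move=> hj; rewrite -(mulG_out M nv J mu j hj) muG mxE (negbTE hj).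
set w := \sum_(i in J) mu 0 i *: nv i.
have wsum : \sum_i mu 0 i *: nv i = w.
  by rewrite (bigID (mem J)) /= [X in _ + X]big1 ?addr0 // => i hi; rewrite mu_out // scale0r.
have hw j : j \in J -> ip M w (nv j) = ip M v (nv j).
  by move=> hj; rewrite -mulG_in // muG mxE hj.
set u := v - w.
have hu j : j \in J -> ip M u (nv j) = 0.
  by move=> hj; rewrite /u ipBl hw // subrr.
have vu : ip M v u = 0.
  apply/le_anti/andP; split.
    by apply: dir_le0 => j hj; rewrite hu.
  rewrite -oppr_le0.
  have -> : - ip M v u = ip M v (- u) by rewrite [RHS]ipC // ipNl ipC.
  by apply: dir_le0 => j hj; rewrite ipNl hu // oppr0.
have wu : ip M w u = 0.
  by rewrite ip_suml big1 // => i hi; rewrite ipZl ipC // hu // mulr0.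
have u0 : u = 0.
  apply: (posdef_eq0 M u ipm).
  by rewrite {1}/u ipBl vu wu subrr.
have vw : v = w by apply/eqP; rewrite -subr_eq0 -/u u0.
split; first by rewrite wsum.
move=> j; case: (boolP (j \in J)) => hj; last by rewrite mu_out.
pose e : 'rV[R]_k := (- delta_mx 0 j) *m invmx (Gm M nv J).
have eG : e *m Gm M nv J = - delta_mx 0 j by rewrite -mulmxA mulVmx // mulmx1.
pose d := \sum_(i in J) e 0 i *: nv i.
have hd i : i \in J -> ip M d (nv i) = - (i == j)%:R.
  by move=> hi; rewrite -mulG_in // eG !mxE eqxx.
have := dir_le0 d.
have -> : ip M v d = - mu 0 j.
  rewrite {1}vw ip_suml (bigD1 j) //= ipZl ipC // hd // eqxx big1 ?addr0 ?mulrN1 //.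
  by move=> i /andP[hi ij]; rewrite ipZl ipC // hd // (negbTE ij) oppr0 mulr0.
rewrite oppr_le0; apply => i hi; rewrite hd // oppr_le0 ler0n //.
Qed.
End LA3.
Section LA4.
Context {R : realType} {n k : nat} (M : 'M[R]_n) (nv : 'I_k -> 'rV[R]_n).

Lemma ip_expand (v w : 'rV[R]_n) : ip M v w = \sum_a v 0 a * (M *m w^T) a 0.
Proof. by rewrite /ip -mulmxA mxE. Qed.

Definition Bm (J : {set 'I_k}) : 'M[R]_(n, k) :=
  \matrix_(a, j) if j \in J then (M *m (nv j)^T) a 0 else 0.

Lemma bJ_Bm (J : {set 'I_k}) (v : 'rV[R]_n) : bJ M nv J v = v *m Bm J.
Proof.
apply/rowP => j; rewrite !mxE.
under [RHS]eq_bigr do rewrite mxE.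
case: ifP => _; first by rewrite ip_expand.
by rewrite big1 // => a _; rewrite mulr0.
Qed.
End LA4.
Section AN1.
Context {R : realType}.

Lemma entry_le_norm {p q} (A : 'M[R]_(p, q)) i j : `|A i j| <= `|A|.
Proof.
rewrite [leRHS]/Num.norm /= mx_normrE.
by apply/bigmax_geP; right => /=; exists (i, j).
Qed.

Lemma cvg_entry {p q} {U : Type} {F : set_system U} {FF : Filter F}
  {f : U -> 'M[R]_(p, q)} {l : 'M[R]_(p, q)} i j :
  f @ F --> l -> (fun u => f u i j) @ F --> l i j.
Proof.
move=> /cvgrPdist_lt h; apply/cvgrPdist_lt => e e0.
apply: filterS (h e e0) => u hu.
by apply: le_lt_trans hu; have := entry_le_norm (l - f u) i j; rewrite !mxE.
Qed.

Lemma lip_cont (f : R -> R) L : (forall s t, `|f s - f t| <= L * `|s - t|) -> continuous f.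
Proof.
move=> hf t; apply/cvgrPdist_lt => e e0.
have L1 : 0 < Num.max L 0 + 1 by rewrite ltr_wpDl // le_max lexx orbT.
near=> s.
apply: (le_lt_trans (hf t s)).
apply: (le_lt_trans (_ : _ <= (Num.max L 0 + 1) * `|t - s|)).
  by apply: ler_wpM2r => //; rewrite (le_trans (_ : L <= Num.max L 0)) ?le_max ?lexx // lerDl.
rewrite -ltr_pdivlMl //.
near: s; apply: (@cvgr_dist_lt _ _ _ (nbhs t) _ id t) => //.
by rewrite mulrC divr_gt0.
Unshelve. all: by end_near.
Qed.
End AN1.
From mathcomp Require Import lra.
Section AN2.
Context {R : realType} (T : R).
Definition cl (t : R) : R := Num.min T (Num.max 0 t).


Lemma cl_in t : 0 <= T -> cl t \in `[0, T].
Proof.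
move=> T0; rewrite /cl in_itv /=; apply/andP; split.
  by rewrite le_min T0 le_max lexx.
by rewrite ge_min lexx.
Qed.

Lemma cl_id t : t \in `[0, T] -> cl t = t.
Proof.
rewrite in_itv /= => /andP[t0 tT]; rewrite /cl (max_r t0) (min_r tT) //.
Qed.

Lemma cl_lip s t : 0 <= T -> `|cl s - cl t| <= `|s - t|.
Proof.
move=> T0; rewrite /cl.
case: (leP 0 s) => s0; case: (leP 0 t) => t0;
case: (leP T s) => sT; case: (leP T t) => tT;
rewrite ?(max_r s0) ?(max_l (ltW s0)) ?(max_r t0) ?(max_l (ltW t0));
rewrite ?(min_l sT) ?(min_r (ltW sT)) ?(min_l tT) ?(min_r (ltW tT)) ?(min_l T0) ?(min_r T0);
rewrite ?subrr ?normr0 //.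
all: rewrite ler_norml; case: (leP s t) => st.
all: first [rewrite (ler0_norm (_ : s - t <= 0)); last lra | rewrite (ger0_norm (_ : 0 <= s - t)); last lra].
all: apply/andP; split; lra.
Qed.
End AN2.
Section AN3.
Context {R : realType} {n : nat}.

Lemma deriv_seq (x : R -> 'rV[R]_n) t : derivable x t 1 ->
  (fun m : nat => (m.+1%:R : R) *: (x t - x (t - m.+1%:R^-1))) @ \oo --> derive1 x t.
Proof.
move=> dx.
pose u (m : nat) : R := - (m.+1%:R^-1).
have hu0 : u @ \oo --> (0:R).
  rewrite -oppr0; apply: cvgN; exact: cvg_harmonic.
have hu : u @ \oo --> (0:R)^'.
  move=> A /= hA; have := hu0 _ hA.
  apply: (@filterS _ \oo) => m /= h; apply: h.
  by rewrite /u oppr_eq0 invr_eq0 pnatr_eq0.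
have := cvg_comp _ _ hu dx.
rewrite derive1E; apply: cvg_trans; apply: near_eq_cvg; apply: nearW => m /=.
rewrite [(u m)%:A]mulr1 /u invrN invrK scaleNr -scalerN opprB addrC.
by rewrite addrC [_ + t]addrC.
Qed.
End AN3.
Theorem lemma6 (R : realType) (n k : nat) (M : 'M[R]_n)
  (nv : 'I_k -> 'rV[R]_n) (c : 'I_k -> R -> R) (T : R) (x : R -> 'rV[R]_n) :
  is_inner_product_matrix M ->
  (forall i, globally_lipschitz (c i)) ->
  (forall t, t \in `[0, T] -> polyhedron M nv c t !=set0) ->
  (forall t y, t \in `[0, T] -> polyhedron M nv c t y ->
      lin_indep_on nv (active M nv c t y)) ->
  is_solution M (polyhedron M nv c) T x ->
  exists lam : 'I_k -> R -> R,
    (forall i t, t \in `[0, T] -> 0 <= lam i t) /\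
    (forall i, (@lebesgue_measure R).-integrable `[0, T] (fun t => (lam i t)%:E)) /\
    {ae (@lebesgue_measure R), forall t, t \in `[0, T] ->
       - derive1 x t = \sum_(i < k) lam i t *: nv i}.
Proof.
move=> ipm clip _ hli [[L hL] [hC hae]].
have MT := ipm.1.
case: (ltP T 0) => T0.
  exists (fun _ _ => 0); split; [|split].
  - by move=> i t; rewrite in_itv /= => /andP[t0 tT]; have := le_trans t0 tT; rewrite leNgt T0.
  - by move=> i; exact: integrable0.
  - apply: nearW => t; rewrite in_itv /= => /andP[t0 tT].
    by have := le_trans t0 tT; rewrite leNgt T0.
pose Lp := Num.max L 0.
have Lp0 : 0 <= Lp by rewrite le_max lexx orbT.
have hLp s t : s \in `[0, T] -> t \in `[0, T] -> `|x s - x t| <= Lp * `|s - t|.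
  move=> hs ht; apply: (le_trans (hL s t hs ht)); apply: ler_wpM2r => //.
  by rewrite le_max lexx.
pose xe t := x (cl T t).
have xe_lip s t : `|xe s - xe t| <= Lp * `|s - t|.
  apply: (le_trans (hLp _ _ (cl_in T s T0) (cl_in T t T0))).
  by apply: ler_wpM2l => //; exact: (cl_lip T s t T0).
have xe_id t : t \in `[0, T] -> xe t = x t by move=> ht; rewrite /xe (cl_id T t ht).
pose xa a t := xe t 0 a.
have xa_lip a s t : `|xa a s - xa a t| <= Lp * `|s - t|.
  apply: le_trans (xe_lip s t); have := entry_le_norm (xe s - xe t) 0 a.
  by rewrite !mxE.
have xa_m a : measurable_fun setT (xa a).
  by apply: continuous_measurable_fun; apply: lip_cont; exact: xa_lip.
pose g a (m : nat) t := m.+1%:R * (xa a t - xa a (t - m.+1%:R^-1)).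
have g_m a m : measurable_fun setT (g a m).
  apply: measurable_funM; first exact: measurable_cst.
  apply: measurable_funB; first exact: xa_m.
  apply: continuous_measurable_fun; apply: (@lip_cont _ _ Lp) => s t.
  by apply: le_trans (xa_lip _ _ _) _; rewrite (_ : s - _ - _ = s - t) //; ring.
have g_bd a m t : `|g a m t| <= Lp.
  rewrite /g normrM ger0_norm // -ler_pdivlMl // mulrC.
  apply: le_trans (xa_lip _ _ _) _.
  rewrite (_ : t - _ = m.+1%:R^-1); last by ring.
  by rewrite ger0_norm // mulrC.
pose f a t := limn_sup (fun m => g a m t).
have f_m a : measurable_fun setT (f a).
  apply: measurable_fun_limn_sup => [t _|t _|m]; last exact: g_m.
    by exists Lp => _ [m _ <-]; have := g_bd a m t; rewrite ler_norml => /andP[].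
  by exists (- Lp) => _ [m _ <-]; have := g_bd a m t; rewrite ler_norml => /andP[].
pose fc a t := Num.max (- Lp) (Num.min Lp (f a t)).
have fc_m a : measurable_fun setT (fc a).
  apply: measurable_maxr; first exact: measurable_cst.
  apply: measurable_minr; first exact: measurable_cst.
  exact: f_m.
have fc_bd a t : `|fc a t| <= Lp.
  rewrite ler_norml; apply/andP; split; first by rewrite le_max lexx.
  rewrite ge_max; apply/andP; split; last by rewrite ge_min lexx.
  by rewrite (le_trans _ Lp0) // oppr_le0.
pose vr t : 'rV[R]_n := \row_a (- fc a t).
pose Q J := Bm M nv J *m invmx (Gm M nv J).
pose S J := [set t | active M nv c t (xe t) = J].
pose lam i t := Num.max 0 (\sum_(J : {set 'I_k}) (\1_(S J) t) * (vr t *m Q J) 0 i).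
have vrQ_m (A : 'M[R]_(n, k)) i : measurable_fun setT (fun t => (vr t *m A) 0 i).
  rewrite (_ : (fun t => _) = (fun t => \sum_a (- fc a t) * A a i)).
    apply: measurable_sum => a; apply: measurable_funM; last exact: measurable_cst.
    by apply: measurable_funN; exact: fc_m.
  by apply/funext => t; rewrite mxE; apply: eq_bigr => a _; rewrite mxE.
have c_m i : measurable_fun setT (c i).
  apply: continuous_measurable_fun; have [Lc hLc] := clip i; exact: lip_cont hLc.
have ipx_m i : measurable_fun setT (fun t => ip M (xe t) (nv i)).
  rewrite (_ : (fun t => _) = (fun t => \sum_a xa a t * (M *m (nv i)^T) a 0)).
    apply: measurable_sum => a; apply: measurable_funM; last exact: measurable_cst.
    exact: xa_m.
  by apply/funext => t; rewrite ip_expand.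
pose Z i := [set t | ip M (xe t) (nv i) = c i t].
have Z_m i : measurable (Z i).
  have := measurable_funB (ipx_m i) (c_m i) measurableT (measurable_set1 0).
  rewrite setTI; congr measurable; apply/seteqP; split => t /=.
    by move/eqP; rewrite subr_eq0 => /eqP.
  by move=> ->; rewrite subrr.
have S_m J : measurable (S J).
  rewrite (_ : S J = \bigcap_(i in setT) (if i \in J then Z i else ~` Z i)).
    apply: fin_bigcap_measurable; first exact: finite_finset.
    by move=> i _; case: ifP => _; [exact: Z_m | apply: measurableC; exact: Z_m].
  apply/seteqP; split => t /=.
    move=> <- i _; rewrite /active inE.
case: eqP => //.
  move=> h; apply/setP => i; rewrite /active inE; have := h i I.
  case: (i \in J) => hz; first by apply/eqP; exact: hz.
  by apply/eqP => e; apply: hz.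
have lam_m i : measurable_fun setT (lam i).
  apply: measurable_maxr; first exact: measurable_cst.
  apply: measurable_sum => J; apply: measurable_funM; last exact: vrQ_m.
  exact: measurable_indic.
have lam_bd i t : `|lam i t| <= \sum_(J : {set 'I_k}) \sum_a Lp * `|Q J a i|.
  rewrite /lam; set X := (\sum_(J : {set 'I_k}) \1_(S J) t * _).
  have hX : `|Num.max 0 X| <= `|X|.
    by case: (leP 0 X) => h; rewrite ?normr0.
  apply: (le_trans hX); apply: (le_trans (ler_norm_sum _ _ _)).
  apply: ler_sum => J _; rewrite normrM.
  apply: (@le_trans _ _ (1 * `|(vr t *m Q J) 0 i|)).
    apply: ler_wpM2r => //; rewrite indicE; case: (_ \in _); by rewrite ?normr1 ?normr0.
  rewrite mul1r mxE; apply: (le_trans (ler_norm_sum _ _ _)).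
  apply: ler_sum => a _; rewrite mxE normrM normrN; apply: ler_wpM2r => //.
exists lam; split; [|split].
- by move=> i t _; rewrite /lam le_max lexx.
- move=> i; apply: measurable_bounded_integrable.
  + exact: measurable_itv.
  + have := lebesgue_measure_itv `[0, T]; rewrite /= => ->.
    by case: ifP => _; [rewrite -EFinD ltry | rewrite ltry].
  + by apply: measurable_funS (lam_m i) => //.
  + exists (\sum_(J : {set 'I_k}) \sum_a Lp * `|Q J a i|); split; first exact: num_real.
    by move=> m hm t _ /=; apply: le_trans (lam_bd i t) (ltW hm).
have h0 : {ae (@lebesgue_measure R), forall t : R, t != 0}.
  exists [set 0]; split; [exact: measurable_set1 | exact: lebesgue_measure_set1 |].
  by move=> t /= h; apply/eqP; apply/negPn/negP; exact: h.
apply: (filterS2 (ae_filter_ringOfSetsType (@lebesgue_measure R)) _ h0 hae) => t t0 H tT.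
have [dx [Cx nc]] := H tT.
set D := derive1 x t.
have tpos : 0 < t.
  by move: tT; rewrite in_itv /= => /andP[t0' _]; rewrite lt_neqAle eq_sym t0 t0'.
have hs := deriv_seq x t dx.
have ev : \forall m \near \oo, (m.+1%:R : R)^-1 <= t.
  have := @cvg_harmonic R; move/cvgr_dist_le => /(_ t tpos).
  by apply: filterS => m /=; rewrite sub0r normrN ger0_norm.
have hga a : (fun m => g a m t) @ \oo --> D 0 a.
  apply: cvg_trans (cvg_entry 0 a hs); apply: near_eq_cvg.
  apply: filterS ev => m hm.
  have ht' : t - m.+1%:R^-1 \in `[0, T].
    move: tT; rewrite !in_itv /= => /andP[_ tT]; rewrite subr_ge0 hm /=.
    by rewrite (le_trans _ tT) // lerBlDr lerDl.
  by rewrite /g /xa !mxE (xe_id _ tT) (xe_id _ ht').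
have Dbd a : `|D 0 a| <= Lp.
  have hn : (fun m => `|g a m t|) @ \oo --> `|D 0 a| by apply: cvg_norm; exact: hga.
  rewrite -(cvg_lim _ hn) //; apply: limr_le; first by apply/cvg_ex; eexists; exact: hn.
  by apply: nearW => m; exact: g_bd.
have fD a : f a t = D 0 a.
  rewrite /f cvg_limn_supE; first exact: (cvg_lim _ (hga a)).
  by apply/cvg_ex; exists (D 0 a); exact: hga.
have fcD a : fc a t = D 0 a.
  rewrite /fc fD; have := Dbd a; rewrite ler_norml => /andP[h1 h2].
  by rewrite (min_r h2) (max_r h1).
have vrD : vr t = - D by apply/rowP => a; rewrite !mxE fcD.
pose J0 := active M nv c t (x t).
have lamE i : lam i t = Num.max 0 ((vr t *m Q J0) 0 i).
  rewrite /lam (bigD1 J0) //= big1 ?addr0.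
    by rewrite indicE mem_set ?mul1r // /S /= xe_id.
  move=> J hJ; rewrite indicE memNset ?mul0r // /S /= xe_id // => hJ0.
  by move: hJ; rewrite -hJ0 eqxx.
have [rep nonneg] := key_repr M nv c t (x t) (- D) ipm Cx nc (hli t (x t) tT Cx).
have muE : vr t *m Q J0 = bJ M nv J0 (- D) *m invmx (Gm M nv J0).
  by rewrite vrD /Q mulmxA bJ_Bm.
rewrite {1}rep; apply: eq_bigr => i _; rewrite lamE muE max_r //.
Qed.
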